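(* Let $\mathbf{W}=\langle W;\to,\neg,{}^{+},{}^{-},1\rangle$ be a quasi-Wajsberg* algebra, $0:=1\to 1$ and $x\wedge y:=\neg(\neg x\vee\neg y)$. Then for any $x,y\in W$: (1) $x\vee 0=0\to x^{+}$ and $x\wedge 0=0\to x^{-}$; (2) $x^{+}\vee 0=0\to x^{+}$, $x^{-}\wedge 0=0\to x^{-}$, $x^{-}\vee 0=0$ and $x^{+}\wedge 0=0$; (3) $x\vee y=\neg(x^{+}\vee y^{+})\to(x^{-}\vee y^{-})$ and $x\wedge y=\neg(x^{+}\wedge y^{+})\to(x^{-}\wedge y^{-})$; (4) $x^{+}\vee x^{-}=0\to x^{+}$ and $x^{+}\wedge x^{-}=0\to x^{-}$; (5) $0\to x=\neg x^{+}\to x^{-}$; (6) $(x\vee y)^{+}=x^{+}\vee y^{+}$, $(x\vee y)^{-}=x^{-}\vee y^{-}$, $(x\wedge y)^{+}=x^{+}\wedge y^{+}$ and $(x\wedge y)^{-}=x^{-}\wedge y^{-}$; (7) $x\vee(x\wedge y)=x\vee x$ and $x\wedge(x\vee y)=x\wedge x$.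
   Context: A quasi-Wajsberg* algebra is an algebra $\langle W;\to,\neg,{}^{+},{}^{-},1\rangle$ of type $\langle2,1,1,1,0\rangle$ such that for all $x,y,z\in W$: (QW*1) $x\to y=\neg y\to\neg x$; (QW*2) $(x\to 1)\to((y\to 1)\to z)=(y\to 1)\to((x\to 1)\to z)$; (QW*3) $(1\to x)\to 1=1$; (QW*4) $(z\to z)\to(x\to y)=x\to y$; (QW*5) $(1\to 1)\to x^{+}=((1\to 1)\to x)^{+}=(x\to 1)\to 1$ and $(1\to 1)\to x^{-}=((1\to 1)\to x)^{-}=(x\to\neg 1)\to\neg 1$; (QW*6) $x\to y=(y^{+}\to x^{-})\to(x^{+}\to y^{-})$; (QW*7) $\neg(x\to y)=y\to x$; (QW*8) $\neg\neg x=x$; (QW*9) $(x\to(\neg x\to y))^{+}=x^{+}\to(\neg x^{+}\to y^{+})$; (QW*10) $x\vee y=y\vee x$; (QW*11) $x\vee(y\vee z)=(x\vee y)\vee z$; (QW*12) $x\to(y\vee z)=(x\to y)\vee(x\to z)$; where $x\vee y:=((x^{+}\to y^{+})^{+}\to(\neg x)^{-})\to((y^{-}\to x^{-})^{-}\to x^{-})$. Conventions: ${}^+,{}^-$ bind tighter than $\neg$, which binds tighter than $\to$, and $\to$ binds tighter than $\vee,\wedge$. *)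

(* Defs.v *)
Record QWStar := {
  carrier :> Type;
  imp : carrier -> carrier -> carrier;
  neg : carrier -> carrier;
  pl : carrier -> carrier;
  mi : carrier -> carrier;
  one : carrier;
  qw_join : carrier -> carrier -> carrier :=
    fun x y => imp (imp (pl (imp (pl x) (pl y))) (mi (neg x)))
                   (imp (mi (imp (mi y) (mi x))) (mi x));
  qw1 : forall x y, imp x y = imp (neg y) (neg x);
  qw2 : forall x y z, imp (imp x one) (imp (imp y one) z)
                      = imp (imp y one) (imp (imp x one) z);
  qw3 : forall x, imp (imp one x) one = one;
  qw4 : forall x y z, imp (imp z z) (imp x y) = imp x y;
  qw5a : forall x, imp (imp one one) (pl x) = pl (imp (imp one one) x);
  qw5b : forall x, pl (imp (imp one one) x) = imp (imp x one) one;
  qw5c : forall x, imp (imp one one) (mi x) = mi (imp (imp one one) x);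
  qw5d : forall x, mi (imp (imp one one) x) = imp (imp x (neg one)) (neg one);
  qw6 : forall x y, imp x y = imp (imp (pl y) (mi x)) (imp (pl x) (mi y));
  qw7 : forall x y, neg (imp x y) = imp y x;
  qw8 : forall x, neg (neg x) = x;
  qw9 : forall x y, pl (imp x (imp (neg x) y)) = imp (pl x) (imp (neg (pl x)) (pl y));
  qw10 : forall x y, qw_join x y = qw_join y x;
  qw11 : forall x y z, qw_join x (qw_join y z) = qw_join (qw_join x y) z;
  qw12 : forall x y z, imp x (qw_join y z) = qw_join (imp x y) (imp x z)
}.

Arguments imp {q}. Arguments neg {q}. Arguments pl {q}. Arguments mi {q}.
Arguments one {q}. Arguments qw_join {q}.

Definition qw_zero {W : QWStar} : W := imp one one.
Definition qw_meet {W : QWStar} (x y : W) : W := neg (qw_join (neg x) (neg y)).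

(* Main.v *)
Require Import Defs.
From Stdlib Require Import Setoid.

Notation OO := (imp one one).
Notation Pp x := (imp (imp x one) one).
Notation Nn x := (imp (imp x (neg one)) (neg one)).

Section L.
Context {W : QWStar}.
Implicit Types x y z u v w a b : W.

Lemma zz z : imp z z = OO.
Proof.
  assert (H1 := qw4 W one one z). assert (H2 := qw4 W z z one).
  assert (H3 := qw7 W (imp z z) (imp one one)).
  rewrite H1, H2 in H3. rewrite (qw7 W one one) in H3. symmetry; exact H3.
Qed.
Lemma Oimp a b : imp OO (imp a b) = imp a b.
Proof. exact (qw4 W a b one). Qed.
Lemma negO : @neg W OO = OO.
Proof. exact (qw7 W one one). Qed.
Lemma O1 : @imp W OO one = one.
Proof. exact (qw3 W one). Qed.
Lemma OneO : @imp W one OO = neg one.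
Proof. assert (H := qw7 W (imp one one) one). rewrite O1 in H. symmetry; exact H. Qed.
Lemma On1 : @imp W OO (neg one) = neg one.
Proof. rewrite (qw1 W OO (neg one)), qw8, negO. exact OneO. Qed.
Lemma plO : @pl W OO = OO.
Proof. transitivity (@pl W (imp OO OO)). rewrite (zz OO). reflexivity.
  rewrite qw5b, O1. reflexivity. Qed.
Lemma miO : @mi W OO = OO.
Proof. transitivity (@mi W (imp OO OO)). rewrite (zz OO). reflexivity.
  rewrite qw5d, On1. apply zz. Qed.
Lemma rpl x : imp OO (pl x) = Pp x.
Proof. rewrite qw5a, qw5b. reflexivity. Qed.
Lemma rmi x : imp OO (mi x) = Nn x.
Proof. rewrite qw5c, qw5d. reflexivity. Qed.
Lemma negr u : neg (imp OO u) = imp OO (neg u).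
Proof. rewrite qw7, qw1, negO. reflexivity. Qed.
Lemma impO u : imp u OO = neg (imp OO u).
Proof. rewrite qw7. reflexivity. Qed.
Lemma Oneg a b : imp OO (neg (imp a b)) = neg (imp a b).
Proof. rewrite qw7. apply Oimp. Qed.
Lemma Pneg x : Pp (neg x) = neg (Nn x).
Proof.
  rewrite (qw1 W (imp (neg x) one) one), (qw7 W (neg x) one),
    (qw7 W (imp x (neg one)) (neg one)), (qw1 W x (neg one)), qw8.
  reflexivity.
Qed.
Lemma Nneg x : Nn (neg x) = neg (Pp x).
Proof.
  rewrite <- (qw8 W (Nn (neg x))), <- Pneg, qw8. reflexivity.
Qed.
Lemma r_eq x : imp OO x = imp (neg (Pp x)) (Nn x).
Proof.
  rewrite (qw6 W OO x), miO, plO, rmi, (impO (pl x)), rpl. reflexivity.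
Qed.
Lemma jj w : qw_join w w = imp OO w.
Proof.
  unfold qw_join. rewrite (zz (pl w)), (zz (mi w)), plO, miO, !rmi, Nneg.
  symmetry; apply r_eq.
Qed.
Lemma K1 u v : imp u (imp OO v) = imp u v.
Proof. rewrite <- (jj v), qw12, jj, Oimp. reflexivity. Qed.
Lemma K2 u v : imp (imp OO u) v = imp u v.
Proof. rewrite (qw1 W (imp OO u) v), negr, K1, (qw1 W u v). reflexivity. Qed.
Lemma pl_reg w : imp OO w = w -> pl w = Pp w.
Proof. intro H. rewrite <- H at 1. rewrite qw5b. reflexivity. Qed.
Lemma mi_reg w : imp OO w = w -> mi w = Nn w.
Proof. intro H. rewrite <- H at 1. rewrite qw5d. reflexivity. Qed.
Lemma imp_pl_l u v : imp (pl u) v = imp (Pp u) v.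
Proof. rewrite <- (K2 (pl u) v), rpl. reflexivity. Qed.
Lemma imp_pl_r u v : imp v (pl u) = imp v (Pp u).
Proof. rewrite <- (K1 v (pl u)), rpl. reflexivity. Qed.
Lemma imp_mi_l u v : imp (mi u) v = imp (Nn u) v.
Proof. rewrite <- (K2 (mi u) v), rmi. reflexivity. Qed.
Lemma imp_mi_r u v : imp v (mi u) = imp v (Nn u).
Proof. rewrite <- (K1 v (mi u)), rmi. reflexivity. Qed.

Lemma J x y : qw_join x y =
  imp (imp (Pp (imp (Pp x) (Pp y))) (neg (Pp x))) (imp (Nn (imp (Nn y) (Nn x))) (Nn x)).
Proof.
  unfold qw_join.
  rewrite (imp_pl_l x (pl y)), (imp_pl_r y (Pp x)).
  rewrite (pl_reg (imp (Pp x) (Pp y))) by apply Oimp.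
  rewrite (imp_mi_r (neg x)), Nneg.
  rewrite (imp_mi_l y (mi x)), (imp_mi_r x (Nn y)).
  rewrite (mi_reg (imp (Nn y) (Nn x))) by apply Oimp.
  rewrite (imp_mi_r x). reflexivity.
Qed.

Lemma Nn_alt z : Nn z = imp one (imp (neg one) z).
Proof. rewrite (qw1 W (imp z (neg one)) (neg one)), qw8, qw7. reflexivity. Qed.
Lemma PN z : Pp (Nn z) = OO.
Proof. rewrite (Nn_alt z), qw3. reflexivity. Qed.
Lemma Pp_alt z : Pp z = neg (Nn (neg z)).
Proof. rewrite <- Pneg, qw8. reflexivity. Qed.
Lemma NP z : Nn (Pp z) = OO.
Proof. rewrite (Pp_alt z), Nneg, PN, negO. reflexivity. Qed.
Lemma NN z : Nn (Nn z) = Nn z.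
Proof.
  assert (H := r_eq (Nn z)). rewrite Oimp in H. rewrite PN, negO, Oimp in H.
  symmetry; exact H.
Qed.
Lemma PP z : Pp (Pp z) = Pp z.
Proof. rewrite (Pp_alt z), Pneg, NN. reflexivity. Qed.
Lemma P_pl x : Pp (pl x) = Pp x.
Proof. rewrite imp_pl_l. apply PP. Qed.
Lemma N_pl x : Nn (pl x) = OO.
Proof. rewrite imp_pl_l. apply NP. Qed.
Lemma P_mi x : Pp (mi x) = OO.
Proof. rewrite imp_mi_l. apply PN. Qed.
Lemma N_mi x : Nn (mi x) = Nn x.
Proof. rewrite imp_mi_l. apply NN. Qed.
Lemma PO : Pp (@imp W one one) = OO.
Proof. rewrite O1. reflexivity. Qed.
Lemma NO : Nn (@imp W one one) = OO.
Proof. rewrite On1. apply zz. Qed.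

End L.
Section L2.
Context {W : QWStar}.
Implicit Types x y z u v w a b : W.

Lemma meetE x y : qw_meet x y = neg (qw_join (neg x) (neg y)).
Proof. reflexivity. Qed.
Lemma neg_join x y : neg (qw_join x y) = qw_meet (neg x) (neg y).
Proof. unfold qw_meet. rewrite !qw8. reflexivity. Qed.

Lemma D1 u v w : imp u (qw_join v w) = qw_join (imp u v) (imp u w).
Proof. apply qw12. Qed.
Lemma D2 u v w : imp u (qw_meet v w) = qw_meet (imp u v) (imp u w).
Proof.
  unfold qw_meet. rewrite <- (qw7 W (neg (qw_join (neg v) (neg w))) u).
  rewrite (qw1 W (neg (qw_join (neg v) (neg w))) u), qw8, qw12.
  rewrite <- (qw1 W v u), <- (qw1 W w u), !qw7. reflexivity.
Qed.
Lemma D3 u v w : imp (qw_join v w) u = qw_meet (imp v u) (imp w u).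
Proof.
  rewrite (qw1 W (qw_join v w) u), neg_join, D2, <- !qw1. reflexivity.
Qed.
Lemma D4 u v w : imp (qw_meet v w) u = qw_join (imp v u) (imp w u).
Proof.
  unfold qw_meet at 1. rewrite (qw1 W _ u), qw8, qw12, <- !qw1. reflexivity.
Qed.
Lemma Pjoin x y : Pp (qw_join x y) = qw_join (Pp x) (Pp y).
Proof. rewrite D3, D4. reflexivity. Qed.
Lemma Njoin x y : Nn (qw_join x y) = qw_join (Nn x) (Nn y).
Proof. rewrite D3, D4. reflexivity. Qed.
Lemma Pmeet x y : Pp (qw_meet x y) = qw_meet (Pp x) (Pp y).
Proof. rewrite D4, D3. reflexivity. Qed.
Lemma Nmeet x y : Nn (qw_meet x y) = qw_meet (Nn x) (Nn y).
Proof. rewrite D4, D3. reflexivity. Qed.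
End L2.
Section L3.
Context {W : QWStar}.
Implicit Types x y z u v w a b : W.

Lemma join_O w : qw_join w OO = Pp w.
Proof.
  rewrite J, PO, NO.
  rewrite (impO (Pp w)), Oimp, Pneg, NP, negO.
  rewrite Oneg, (Oimp (imp w (neg one)) (neg one)), NN, zz.
  rewrite impO, Oneg, qw8. reflexivity.
Qed.
End L3.
Lemma zz_neg {W:QWStar} (z:W) : imp (neg z) (neg z) = OO.
Proof. apply zz. Qed.
Lemma zz_imp {W:QWStar} (a b:W) : imp (imp a b) (imp a b) = OO.
Proof. apply zz. Qed.
Ltac simp := repeat (first [rewrite Oimp | rewrite Oneg | rewrite qw8 | rewrite negO
  | rewrite PO | rewrite NO | rewrite P_pl | rewrite N_pl | rewrite P_mi | rewrite N_mi
  | rewrite PP | rewrite NN | rewrite PN | rewrite NP | rewrite Pneg | rewrite Nneg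
  | rewrite rmi | rewrite rpl | rewrite impO | rewrite zz_neg | rewrite zz_imp]).
Section L4.
Context {W : QWStar}.
Implicit Types x y z u v w a b : W.

Lemma i1b x : qw_meet x OO = imp OO (mi x).
Proof. unfold qw_meet. rewrite negO, join_O. simp. reflexivity. Qed.
Lemma i2a x : qw_join (pl x) OO = imp OO (pl x).
Proof. rewrite join_O. simp. reflexivity. Qed.
Lemma i2b x : qw_meet (mi x) OO = imp OO (mi x).
Proof. unfold qw_meet. rewrite negO, join_O. simp. reflexivity. Qed.
Lemma i2c x : qw_join (mi x) OO = OO.
Proof. rewrite join_O. simp. reflexivity. Qed.
Lemma i2d x : qw_meet (pl x) OO = OO.
Proof. unfold qw_meet. rewrite negO, join_O. simp. reflexivity. Qed.
Lemma i3a x y : qw_join x y = imp (neg (qw_join (pl x) (pl y))) (qw_join (mi x) (mi y)).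
Proof. rewrite !J. simp. reflexivity. Qed.
Lemma i3b x y : qw_meet x y = imp (neg (qw_meet (pl x) (pl y))) (qw_meet (mi x) (mi y)).
Proof. unfold qw_meet. rewrite !J. simp. rewrite qw7. reflexivity. Qed.
Lemma i4a x : qw_join (pl x) (mi x) = imp OO (pl x).
Proof. rewrite !J. simp. reflexivity. Qed.
Lemma i4b x : qw_meet (pl x) (mi x) = imp OO (mi x).
Proof. unfold qw_meet. rewrite !J. simp. reflexivity. Qed.
End L4.
Section L5.
Context {W : QWStar}.
Implicit Types x y z u v w a b : W.

Lemma i5 x : imp OO x = imp (neg (pl x)) (mi x).
Proof. rewrite (imp_mi_r x), <- (K2 (neg (pl x))), <- negr, rpl. apply r_eq. Qed.
Lemma join_reg x y : imp OO (qw_join x y) = qw_join x y.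
Proof. unfold qw_join. apply Oimp. Qed.
Lemma meet_reg x y : imp OO (qw_meet x y) = qw_meet x y.
Proof. unfold qw_meet, qw_join. apply Oneg. Qed.
Lemma i6a x y : pl (qw_join x y) = qw_join (pl x) (pl y).
Proof. rewrite pl_reg by apply join_reg. rewrite Pjoin, !J. simp. reflexivity. Qed.
Lemma i6b x y : mi (qw_join x y) = qw_join (mi x) (mi y).
Proof. rewrite mi_reg by apply join_reg. rewrite Njoin, !J. simp. reflexivity. Qed.
Lemma i6c x y : pl (qw_meet x y) = qw_meet (pl x) (pl y).
Proof. rewrite pl_reg by apply meet_reg. rewrite Pmeet. unfold qw_meet. rewrite !J. simp. reflexivity. Qed.
Lemma i6d x y : mi (qw_meet x y) = qw_meet (mi x) (mi y).
Proof. rewrite mi_reg by apply meet_reg. rewrite Nmeet. unfold qw_meet. rewrite !J. simp. reflexivity. Qed.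

Lemma meetO_l w : qw_meet OO w = Nn w.
Proof. unfold qw_meet. rewrite negO, qw10, join_O, Pneg, qw8. reflexivity. Qed.
Lemma joinO_l w : qw_join OO w = Pp w.
Proof. rewrite qw10. apply join_O. Qed.

Lemma absP x y : qw_join (pl x) (qw_meet (pl x) (pl y)) = Pp x.
Proof.
  rewrite J, Pmeet, Nmeet. simp. rewrite meetO_l, NO. rewrite D2. simp.
  rewrite meetO_l. simp. reflexivity.
Qed.
End L5.
Section L6.
Context {W : QWStar}.
Implicit Types x y z u v w a b : W.
Lemma absN x y : qw_join (mi x) (qw_meet (mi x) (mi y)) = Nn x.
Proof.
  rewrite J, Pmeet, Nmeet. simp. rewrite meetO_l. simp. rewrite D4. simp.
  rewrite joinO_l. simp. reflexivity.
Qed.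
Lemma i7a x y : qw_join x (qw_meet x y) = qw_join x x.
Proof.
  rewrite i3a, jj, r_eq, i6c, i6d, absP, absN. reflexivity.
Qed.
Lemma i7b x y : qw_meet x (qw_join x y) = qw_meet x x.
Proof.
  unfold qw_meet at 1. rewrite (neg_join x y), i7a. reflexivity.
Qed.
End L6.
Theorem proposition3p5 (W : QWStar) (x y : W) :
  let O := @qw_zero W in
  (* (1) *)
  (qw_join x O = imp O (pl x) /\ qw_meet x O = imp O (mi x)) /\
  (* (2) *)
  (qw_join (pl x) O = imp O (pl x) /\ qw_meet (mi x) O = imp O (mi x) /\
   qw_join (mi x) O = O /\ qw_meet (pl x) O = O) /\
  (* (3) *)
  (qw_join x y = imp (neg (qw_join (pl x) (pl y))) (qw_join (mi x) (mi y)) /\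
   qw_meet x y = imp (neg (qw_meet (pl x) (pl y))) (qw_meet (mi x) (mi y))) /\
  (* (4) *)
  (qw_join (pl x) (mi x) = imp O (pl x) /\ qw_meet (pl x) (mi x) = imp O (mi x)) /\
  (* (5) *)
  (imp O x = imp (neg (pl x)) (mi x)) /\
  (* (6) *)
  (pl (qw_join x y) = qw_join (pl x) (pl y) /\ mi (qw_join x y) = qw_join (mi x) (mi y) /\
   pl (qw_meet x y) = qw_meet (pl x) (pl y) /\ mi (qw_meet x y) = qw_meet (mi x) (mi y)) /\
  (* (7) *)
  (qw_join x (qw_meet x y) = qw_join x x /\ qw_meet x (qw_join x y) = qw_meet x x).
Proof.
  cbv zeta. unfold qw_zero.
  repeat split.
  - rewrite join_O, rpl; reflexivity.
  - apply i1b.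
  - apply i2a.
  - apply i2b.
  - apply i2c.
  - apply i2d.
  - apply i3a.
  - apply i3b.
  - apply i4a.
  - apply i4b.
  - apply i5.
  - apply i6a.
  - apply i6b.
  - apply i6c.
  - apply i6d.
  - apply i7a.
  - apply i7b.
Qed.
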